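(* Let $K=\mathrm{SU}(2)$, $\mathcal{M}=\{(g_1,h_1,g_2,h_2)\in K^4:[g_1,h_1][g_2,h_2]=I\}/K$ with the quotient topology, and $\mathcal{M}^\circ=\mu^{-1}(\tilde\Delta^\circ)$. Then $\mathcal{M}^\circ$ is open and dense in $\mathcal{M}$.
   Context: $[a,b]=aba^{-1}b^{-1}$; $K$ acts by simultaneous conjugation; $[g_1;h_1;g_2;h_2]$ denotes a class. For $a\in K$ let $f(a)=\frac1\pi\arccos(\mathrm{tr}(a)/2)$; $\mu([g_1;h_1;g_2;h_2])=(f(h_1),f(h_2),f(h_1h_2))$. $\tilde\Delta$ is the tetrahedron with vertices $(0,0,0),(0,1,1),(1,0,1),(1,1,0)$ and $\tilde\Delta^\circ$ its interior. *)

(* Defs.v *)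
From HB Require Import structures.
From mathcomp Require Import all_boot all_order all_algebra.
From mathcomp Require Import all_classical all_reals all_analysis.
From mathcomp Require Import complex.
Set Implicit Arguments. Unset Strict Implicit. Unset Printing Implicit Defensive.
Import Order.TTheory GRing.Theory Num.Theory.
Import numFieldNormedType.Exports.
Local Open Scope classical_set_scope.
Local Open Scope ring_scope.

Section SU2Moduli.
Variable R : realType.
Local Notation C := (R[i]).
Local Notation mx2 := ('M[C]_2).

Definition conjT (g : mx2) : mx2 := (map_mx Num.conj g)^T.
Definition SU2 (g : mx2) : Prop := g *m conjT g = 1%:M /\ \det g = 1.

Definition commut (a b : mx2) : mx2 := a *m b *m invmx a *m invmx b.

Definition quad := (mx2 * mx2 * mx2 * mx2)%type.

Definition Xrep (x : quad) : Prop :=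
  let: (g1, h1, g2, h2) := x in
  [/\ SU2 g1, SU2 h1, SU2 g2 & SU2 h2] /\
  commut g1 h1 *m commut g2 h2 = 1%:M.

Definition Xtype := {x : quad | Xrep x}.

(* Subspace topology on X inherited from the standard topology of
   (M_2(C))^4 = C^16: sup-distance of all entries. *)
Definition close (e : R) (x y : quad) : Prop :=
  let: (a1, a2, a3, a4) := x in
  let: (b1, b2, b3, b4) := y in
  forall i j : 'I_2,
    [/\ `|a1 i j - b1 i j| < (e%:C)%C, `|a2 i j - b2 i j| < (e%:C)%C,
        `|a3 i j - b3 i j| < (e%:C)%C & `|a4 i j - b4 i j| < (e%:C)%C].

Definition openX (A : set Xtype) : Prop :=
  forall x, A x -> exists2 e : R, 0 < e &
    forall y : Xtype, close e (proj1_sig x) (proj1_sig y) -> A y.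

Definition conjq (k : mx2) (x : quad) : quad :=
  let: (g1, h1, g2, h2) := x in
  (k *m g1 *m invmx k, k *m h1 *m invmx k, k *m g2 *m invmx k,
   k *m h2 *m invmx k).

Definition orbit (x : quad) : set quad :=
  [set y | exists2 k, SU2 k & y = conjq k x].

(* M = X / K : points are the K-orbits of points of X *)
Definition Mspace := {S : set quad | exists x : Xtype, S = orbit (proj1_sig x)}.

Definition qmap (x : Xtype) : Mspace :=
  exist _ (orbit (proj1_sig x)) (ex_intro _ x erefl).

Definition openM (U : set Mspace) : Prop := openX (qmap @^-1` U).

Definition denseM (U : set Mspace) : Prop :=
  forall V : set Mspace, openM V -> V !=set0 -> (V `&` U) !=set0.

(* f(a) = arccos(tr(a)/2)/pi  (tr(a) is real for a in SU(2)) *)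
Definition fK (a : mx2) : R := acos (complex.Re (\tr a) / 2) / pi.

Definition mu_rep (x : quad) : 'rV[R]_3 :=
  let: (g1, h1, g2, h2) := x in
  \row_(i < 3) [:: fK h1; fK h2; fK (h1 *m h2)]`_i.

Definition rep (m : Mspace) : Xtype := projT1 (cid (projT2 m)).

Definition mu (m : Mspace) : 'rV[R]_3 := mu_rep (proj1_sig (rep m)).

Definition tvert (i : 'I_4) : 'rV[R]_3 :=
  \row_(j < 3) nth 0 (nth [::] [:: [:: 0; 0; 0]; [:: 0; 1; 1]; [:: 1; 0; 1]; [:: 1; 1; 0]] i) j.

Definition tetra : set 'rV[R]_3 :=
  [set p | exists l : 'I_4 -> R, (forall i, 0 <= l i) /\
     \sum_i l i = 1 /\ p = \sum_i l i *: tvert i].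

Definition tetra_int : set 'rV[R]_3 := interior tetra.

Definition Mcirc : set Mspace := mu @^-1` tetra_int.

End SU2Moduli.

(* Main.v *)
Require Import Defs.
From HB Require Import structures.
From mathcomp Require Import all_boot all_order all_algebra.
From mathcomp Require Import all_classical all_reals all_analysis.
From mathcomp Require Import complex.
From mathcomp Require Import ring lra.
Set Implicit Arguments. Unset Strict Implicit. Unset Printing Implicit Defensive.
Import Order.TTheory GRing.Theory Num.Theory.
Import numFieldNormedType.Exports.
Local Open Scope classical_set_scope.
Local Open Scope ring_scope.

Section Quat.
Variable R : realType.
Local Notation C := (R[i]).
Local Notation mx2 := ('M[C]_2).

Record quat := Quat { q0 : R; q1 : R; q2 : R; q3 : R }.

Definition qmul (p q : quat) : quat :=
  Quat (q0 p * q0 q - q1 p * q1 q - q2 p * q2 q - q3 p * q3 q)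
       (q0 p * q1 q + q1 p * q0 q + q2 p * q3 q - q3 p * q2 q)
       (q0 p * q2 q + q2 p * q0 q + q3 p * q1 q - q1 p * q3 q)
       (q0 p * q3 q + q3 p * q0 q + q1 p * q2 q - q2 p * q1 q).
Definition qconj (p : quat) : quat := Quat (q0 p) (- q1 p) (- q2 p) (- q3 p).
Definition qnorm (p : quat) : R := q0 p ^+ 2 + q1 p ^+ 2 + q2 p ^+ 2 + q3 p ^+ 2.
Definition qone : quat := Quat 1 0 0 0.

Definition Qe (p : quat) (i j : 'I_2) : C :=
  if (i : nat) == 0%N then
    (if (j : nat) == 0%N then (q0 p +i* q1 p)%C else (q2 p +i* q3 p)%C)
  else (if (j : nat) == 0%N then ((- q2 p) +i* q3 p)%C else (q0 p +i* (- q1 p))%C).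
Definition Qm (p : quat) : mx2 := \matrix_(i, j) Qe p i j.

Lemma ord2P (i : 'I_2) : i = ord0 \/ i = ord_max.
Proof. by case: i => [[|[|//]] Hi]; [left|right]; apply: val_inj. Qed.

Lemma sum2 (F : 'I_2 -> C) : \sum_(k < 2) F k = F ord0 + F ord_max.
Proof. rewrite !big_ord_recl big_ord0 addr0. by congr (F _ + F _); apply: val_inj. Qed.

Lemma ceqP (a b c d : R) : a = c -> b = d -> (a +i* b)%C = (c +i* d)%C.
Proof. by move=> -> ->. Qed.

Lemma QmM p q : Qm p *m Qm q = Qm (qmul p q).
Proof.
apply/matrixP => i j; rewrite !mxE sum2 !mxE.
by case: (ord2P i) => ->; case: (ord2P j) => ->; rewrite /Qe /=; apply: ceqP; ring.
Qed.

Lemma det2 (A : mx2) : \det A = A ord0 ord0 * A ord_max ord_max - A ord0 ord_max * A ord_max ord0.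
Proof.
rewrite (expand_det_row _ ord0) sum2 /cofactor !det_mx11 !mxE /=.
have -> : lift ord0 0 = ord_max :> 'I_2 by apply: val_inj.
have -> : lift ord_max 0 = ord0 :> 'I_2 by apply: val_inj.
rewrite expr0 expr1 mul1r; ring.
Qed.
Lemma quatP (a b c d a' b' c' d' : R) :
  a = a' -> b = b' -> c = c' -> d = d' -> Quat a b c d = Quat a' b' c' d'.
Proof. by move=> -> -> -> ->. Qed.

Lemma Qm_inj p q : Qm p = Qm q -> p = q.
Proof.
move=> E.
have E1 := congr1 (fun M : mx2 => M ord0 ord0) E.
have E2 := congr1 (fun M : mx2 => M ord0 ord_max) E.
move: E1 E2; rewrite !mxE /Qe /= => -[e0 e1] [e2 e3]; clear E.
by case: p q e0 e1 e2 e3 => a b c d [a' b' c' d'] /= -> -> -> ->.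
Qed.

Lemma Qm1 : Qm qone = 1%:M.
Proof.
apply/matrixP => i j; rewrite !mxE.
by case: (ord2P i) => ->; case: (ord2P j) => ->; rewrite /Qe /=; apply: ceqP; ring.
Qed.

Lemma conjT_Qm p : conjT (Qm p) = Qm (qconj p).
Proof.
apply/matrixP => i j; rewrite !mxE.
by case: (ord2P i) => ->; case: (ord2P j) => ->; rewrite /Qe /=; apply: ceqP; ring.
Qed.

Lemma det_Qm p : \det (Qm p) = ((qnorm p)%:C)%C.
Proof. rewrite det2 !mxE /Qe /=; apply: ceqP; rewrite /qnorm; ring. Qed.

Lemma tr_Qm p : \tr (Qm p) = ((q0 p *+ 2)%:C)%C.
Proof. rewrite /mxtrace sum2 !mxE /Qe /=; apply: ceqP; ring. Qed.

Lemma qmul_conj p : qmul p (qconj p) = Quat (qnorm p) 0 0 0.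
Proof. rewrite /qmul /qconj /qnorm /=; apply: quatP; ring. Qed.

Lemma SU2_Qm p : qnorm p = 1 -> SU2 (Qm p).
Proof.
move=> n1; split; last by rewrite det_Qm n1.
by rewrite conjT_Qm QmM qmul_conj n1 -Qm1.
Qed.

Lemma invmx_Qm p : qnorm p = 1 -> invmx (Qm p) = Qm (qconj p).
Proof.
move=> n1.
have E : Qm p *m Qm (qconj p) = 1%:M by rewrite QmM qmul_conj n1 -Qm1.
have [U _] := mulmx1_unit E.
by rewrite -[RHS](mulKmx U) E mulmx1.
Qed.

Lemma Qm_unit p : qnorm p = 1 -> Qm p \in unitmx.
Proof.
move=> n1.
have E : Qm p *m Qm (qconj p) = 1%:M by rewrite QmM qmul_conj n1 -Qm1.
by have [U _] := mulmx1_unit E.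
Qed.

Lemma SU2_decomp g : SU2 g -> exists p, g = Qm p /\ qnorm p = 1.
Proof.
case=> U D.
have E00 := congr1 (fun M : mx2 => M ord0 ord0) U.
have E10 := congr1 (fun M : mx2 => M ord_max ord0) U.
move: E00 E10; rewrite !mxE !sum2 !mxE /= => E00 E10.
move: D; rewrite det2 => D.
set a := g ord0 ord0 in E00 E10 D *.
set b := g ord0 ord_max in E00 E10 D *.
set c := g ord_max ord0 in E00 E10 D *.
set d := g ord_max ord_max in E00 E10 D *.
have Ed : d = Num.conj a.
  have E : d * (a * Num.conj a + b * Num.conj b) =
     Num.conj a * (a * d - b * c) + b * (c * Num.conj a + d * Num.conj b) by ring.
  by rewrite E00 D E10 mulr1 mulr0 mulr1 addr0 in E.
have Ec : c = - Num.conj b.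
  have E : c * (a * Num.conj a + b * Num.conj b) =
     - Num.conj b * (a * d - b * c) + a * (c * Num.conj a + d * Num.conj b) by ring.
  by rewrite E00 D E10 mulr1 mulr0 mulr1 addr0 in E.
move: E00; rewrite /a /b => E00.
exists (Quat (complex.Re a) (complex.Im a) (complex.Re b) (complex.Im b)); split.
  apply/matrixP => i j; rewrite !mxE.
  case: (ord2P i) => ->; case: (ord2P j) => ->; rewrite /Qe /=.
  - by rewrite /a; case: (g ord0 ord0).
  - by rewrite /b; case: (g ord0 ord_max).
  - by rewrite -/c Ec /b; case: (g ord0 ord_max) => x y /=; apply: ceqP; ring.
  - by rewrite -/d Ed /a; case: (g ord0 ord0) => x y /=; apply: ceqP; ring.
move: E00; rewrite /qnorm /a /b /=.
case: (g ord0 ord0) => x y; case: (g ord0 ord_max) => z w /= [E _].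
rewrite -E; ring.
Qed.
End Quat.

Section Tri.
Variable R : realType.

Lemma cos_lt_mono (x y : R) : 0 <= x <= pi -> 0 <= y <= pi -> cos x < cos y -> y < x.
Proof.
move=> hx hy; rewrite ltr_cos //; by rewrite in_itv /=.
Qed.

Lemma acos_tri (x y z t : R) :
  -1 <= x <= 1 -> -1 <= y <= 1 ->
  z = x * y - t -> `|t| < Num.sqrt (1 - x ^+ 2) * Num.sqrt (1 - y ^+ 2) ->
  [/\ acos x - acos y < acos z, acos y - acos x < acos z, acos z < acos x + acos y
     & acos z < pi *+ 2 - acos x - acos y].
Proof.
move=> hx hy hz ht.
have [/andP[a0 api] ca] := acos_def hx.
have [/andP[b0 bpi] cb] := acos_def hy.
move: a0 api ca b0 bpi cb.
set a := acos x; set b := acos y => a0 api ca b0 bpi cb.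
have sa : sin a = Num.sqrt (1 - x ^+ 2) by rewrite sin_acos.
have sb : sin b = Num.sqrt (1 - y ^+ 2) by rewrite sin_acos.
have cAB : cos (a - b) = x * y + Num.sqrt (1 - x ^+ 2) * Num.sqrt (1 - y ^+ 2).
  by rewrite cosB ca cb sa sb.
have cApB : cos (a + b) = x * y - Num.sqrt (1 - x ^+ 2) * Num.sqrt (1 - y ^+ 2).
  by rewrite cosD ca cb sa sb.
have tl := ler_norm t; have tl' : - t <= `|t| by rewrite -normrN ler_norm.
have zlt : z < cos (a - b) by rewrite hz cAB; lra.
have zgt : cos (a + b) < z by rewrite hz cApB; lra.
have hz' : -1 <= z <= 1.
  have := cos_geN1 (a + b); have := cos_le1 (a - b); lra.
have [/andP[c0 cpi] cc] := acos_def hz'.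
move: c0 cpi cc; set c := acos z => c0 cpi cc.
have pi0 := pi_gt0 R.
have H1 : `|a - b| < c.
  apply: cos_lt_mono.
  - by rewrite cpi c0.
  - rewrite normr_ge0 /=; case: (lerP 0 (a - b)) => h.
      by rewrite ger0_norm //; lra.
    by rewrite ltr0_norm //; lra.
  - rewrite cc; case: (lerP 0 (a - b)) => h.
      by rewrite ger0_norm.
    by rewrite ltr0_norm // cosN.
have H1a : a - b < c by apply: le_lt_trans H1; exact: ler_norm.
have H1b : b - a < c by apply: le_lt_trans H1; rewrite distrC; exact: ler_norm.
case: (lerP (a + b) pi) => hab.
  have H2 : c < a + b.
    apply: cos_lt_mono; first (apply/andP; split; lra).
      by rewrite cpi c0.
    by rewrite cc.
  split => //; lra.
have H3 : c < pi *+ 2 - a - b.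
  apply: cos_lt_mono; first (apply/andP; split; rewrite ?mulr2n; lra).
    by rewrite cpi c0.
  rewrite cc.
  have -> : pi *+ 2 - a - b = - (a + b) + pi *+ 2 by ring.
  by rewrite cosD2pi cosN.
split => //; lra.
Qed.
Definition pt3 (a b c : R) : 'rV[R]_3 := \row_(i < 3) [:: a; b; c]`_i.

Lemma sum4 (F : 'I_4 -> R) : \sum_(k < 4) F k =
  F (@Ordinal 4 0 isT) + F (@Ordinal 4 1 isT) + F (@Ordinal 4 2 isT) + F (@Ordinal 4 3 isT).
Proof.
rewrite !big_ord_recl big_ord0 addr0 !addrA.
by congr (F _ + F _ + F _ + F _); apply: val_inj.
Qed.

Lemma ord3P (j : 'I_3) : j = (@Ordinal 3 0 isT) \/ j = (@Ordinal 3 1 isT) \/ j = (@Ordinal 3 2 isT).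
Proof. by case: j => [[|[|[|//]]] Hi]; [left|right;left|right;right]; apply: val_inj. Qed.

Lemma ord4P (j : 'I_4) : [\/ j = (@Ordinal 4 0 isT), j = (@Ordinal 4 1 isT),
   j = (@Ordinal 4 2 isT) | j = (@Ordinal 4 3 isT)].
Proof.
by case: j => [[|[|[|[|//]]]] Hi]; [apply: Or41|apply: Or42|apply: Or43|apply: Or44]; apply: val_inj.
Qed.

Lemma tetra_pt (a b c : R) :
  0 <= 1 - (a + b + c) / 2 -> 0 <= (b + c - a) / 2 -> 0 <= (a + c - b) / 2 ->
  0 <= (a + b - c) / 2 -> tetra (pt3 a b c).
Proof.
move=> h0 h1 h2 h3.
exists (fun i : 'I_4 => [:: 1 - (a + b + c) / 2; (b + c - a) / 2; (a + c - b) / 2;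
   (a + b - c) / 2]`_i); split; [|split].
- by move=> i; case: (ord4P i) => ->.
- rewrite sum4 /=; lra.
- apply/rowP => j; rewrite !mxE summxE sum4 !mxE /=.
  by case: (ord3P j) => [|[]] -> /=; lra.
Qed.

Lemma tetra_int_pt (a b c : R) :
  b - a < c -> a - b < c -> c < a + b -> c < 2 - a - b -> tetra_int (pt3 a b c).
Proof.
move=> h1 h2 h3 h0.
pose m := Num.min (Num.min (2 - a - b - c) (b + c - a)) (Num.min (a + c - b) (a + b - c)).
have m0 : 0 < m by rewrite /m !lt_min; apply/andP; split; apply/andP; split; lra.
have mle : [/\ m <= 2 - a - b - c, m <= b + c - a, m <= a + c - b & m <= a + b - c].
  by split; rewrite /m !ge_min lexx ?orbT.
case: mle => m1 m2 m3 m4.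
rewrite /tetra_int /interior /=; apply/nbhs_ballP; exists (m / 4); first by rewrite /=; lra.
move=> q [_ Hq].
have qE : q = pt3 (q ord0 (@Ordinal 3 0 isT)) (q ord0 (@Ordinal 3 1 isT)) (q ord0 (@Ordinal 3 2 isT)).
  apply/rowP => j; rewrite !mxE.
  by case: (ord3P j) => [|[]] ->; congr (q _ _); apply: val_inj.
have B0 := Hq ord0 (@Ordinal 3 0 isT).
have B1 := Hq ord0 (@Ordinal 3 1 isT).
have B2 := Hq ord0 (@Ordinal 3 2 isT).
move: B0 B1 B2; rewrite /ball /= !mxE /= => B0 B1 B2.
rewrite qE.
move: B0 B1 B2; set x := q ord0 _; set y := q ord0 _; set z := q ord0 _.
rewrite !ltr_norml => /andP[B0 B0'] /andP[B1 B1'] /andP[B2 B2'].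
apply: tetra_pt; lra.
Qed.
End Tri.

Section Good.
Variable R : realType.
Local Notation quat := (quat R).

Definition crs2 (b d : quat) : R :=
  (q2 b * q3 d - q3 b * q2 d) ^+ 2 + (q3 b * q1 d - q1 b * q3 d) ^+ 2 +
  (q1 b * q2 d - q2 b * q1 d) ^+ 2.

Lemma divpi_lt (u v : R) : u < v -> u / pi < v / pi.
Proof. by move=> h; rewrite ltr_pM2r // invr_gt0 pi_gt0. Qed.

Lemma good_int (b d : quat) : qnorm b = 1 -> qnorm d = 1 -> 0 < crs2 b d ->
  tetra_int (pt3 (acos (q0 b) / pi) (acos (q0 d) / pi) (acos (q0 (qmul b d)) / pi)).
Proof.
rewrite /qnorm /crs2 => nb nd cr.
have hx : -1 <= q0 b <= 1 by apply/andP; split; nra.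
have hy : -1 <= q0 d <= 1 by apply/andP; split; nra.
set t := q1 b * q1 d + q2 b * q2 d + q3 b * q3 d.
have hz : q0 (qmul b d) = q0 b * q0 d - t by rewrite /qmul /t /=; ring.
have ht : `|t| < Num.sqrt (1 - q0 b ^+ 2) * Num.sqrt (1 - q0 d ^+ 2).
  have eb : 1 - q0 b ^+ 2 = q1 b ^+ 2 + q2 b ^+ 2 + q3 b ^+ 2 by lra.
  have ed : 1 - q0 d ^+ 2 = q1 d ^+ 2 + q2 d ^+ 2 + q3 d ^+ 2 by lra.
  rewrite eb ed -sqrtrM; last by rewrite !addr_ge0 ?sqr_ge0.
  have E : (q1 b ^+ 2 + q2 b ^+ 2 + q3 b ^+ 2) * (q1 d ^+ 2 + q2 d ^+ 2 + q3 d ^+ 2) - t ^+ 2 =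
    (q2 b * q3 d - q3 b * q2 d) ^+ 2 + (q3 b * q1 d - q1 b * q3 d) ^+ 2 +
    (q1 b * q2 d - q2 b * q1 d) ^+ 2 by rewrite /t; ring.
  have t2 := sqr_ge0 t.
  rewrite -sqrtr_sqr ltr_sqrt; last by lra.
  lra.
have [h1 h2 h3 h4] := acos_tri hx hy hz ht.
have pi0 := pi_gt0 R.
apply: tetra_int_pt.
- rewrite -mulrBl; exact: divpi_lt.
- rewrite -mulrBl; exact: divpi_lt.
- rewrite -mulrDl; exact: divpi_lt.
- have -> : 2 - acos (q0 b) / pi - acos (q0 d) / pi = (pi *+ 2 - acos (q0 b) - acos (q0 d)) / pi.
    rewrite !mulrBl mulrnAl divff ?lt0r_neq0 //.
  exact: divpi_lt.
Qed.
End Good.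

Section Moves.
Variable R : realType.
Local Notation C := (R[i]).
Local Notation mx2 := ('M[C]_2).
Local Notation quat := (quat R).

Lemma commutE (a b : mx2) : commut a b = a * b * a^-1 * b^-1.
Proof. by []. Qed.

Section URing.
Variable T : unitRingType.
Definition cm (a b : T) := a * b * a^-1 * b^-1.

Lemma cm_mulr (a b k : T) : a \is a GRing.unit -> b \is a GRing.unit -> k \is a GRing.unit ->
  a * k = k * a -> cm a (b * k) = cm a b.
Proof.
move=> ua ub uk ak; rewrite /cm invrM //.
have kai : k * a^-1 = a^-1 * k.
  have : GRing.comm k a by rewrite /GRing.comm ak.
  by move/commrV => ->.
rewrite !mulrA -(mulrA _ k a^-1) kai !mulrA mulrK //.
Qed.

Lemma cm_conj (a b k : T) : a \is a GRing.unit -> b \is a GRing.unit -> k \is a GRing.unit ->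
  cm (k * a * k^-1) (k * b * k^-1) = k * cm a b * k^-1.
Proof.
move=> ua ub uk; rewrite /cm !invrM ?unitrV ?invrK ?ua ?ub ?uk //; try by rewrite unitrMl.
rewrite !mulrA !mulrVK //.
all: by rewrite unitrMl.
Qed.

End URing.

Definition QX (a1 b1 a2 b2 : quat) : Prop :=
  [/\ qnorm a1 = 1, qnorm b1 = 1, qnorm a2 = 1 & qnorm b2 = 1] /\
  commut (Qm a1) (Qm b1) *m commut (Qm a2) (Qm b2) = 1%:M.

Definition qconjg (k p : quat) : quat := qmul (qmul k p) (qconj k).

Lemma qnormM (p q : quat) : qnorm (qmul p q) = qnorm p * qnorm q.
Proof. rewrite /qnorm /qmul /=; ring. Qed.

Lemma qnormC (p : quat) : qnorm (qconj p) = qnorm p.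
Proof. rewrite /qnorm /qconj /=; ring. Qed.

Lemma QmU (p : quat) : qnorm p = 1 -> Qm p \is a GRing.unit.
Proof. exact: Qm_unit. Qed.

Lemma QmMr (p q : quat) : Qm (qmul p q) = Qm p * Qm q.
Proof. by rewrite -QmM. Qed.

Lemma QmV (p : quat) : qnorm p = 1 -> Qm (qconj p) = (Qm p)^-1.
Proof. by move=> n1; rewrite -invmx_Qm. Qed.

Lemma move1 (a1 b1 a2 b2 k : quat) : QX a1 b1 a2 b2 -> qnorm k = 1 -> qmul a1 k = qmul k a1 ->
  QX a1 (qmul b1 k) a2 b2.
Proof.
move=> [[n1 n2 n3 n4] E] nk ck; split; first by split; rewrite ?qnormM ?n2 ?nk ?mulr1.
rewrite QmMr commutE -/(cm _ _) cm_mulr ?QmU //; last by rewrite -!QmMr ck.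
Qed.

Lemma move2 (a1 b1 a2 b2 k : quat) : QX a1 b1 a2 b2 -> qnorm k = 1 -> qmul a2 k = qmul k a2 ->
  QX a1 b1 a2 (qmul b2 k).
Proof.
move=> [[n1 n2 n3 n4] E] nk ck; split; first by split; rewrite ?qnormM ?n4 ?nk ?mulr1.
rewrite QmMr [commut _ (_ * _)]commutE -/(cm _ _) cm_mulr ?QmU //; last by rewrite -!QmMr ck.
Qed.

Lemma move4 (a1 b1 a2 b2 k : quat) : QX a1 b1 a2 b2 -> qnorm k = 1 ->
  commut (Qm a2) (Qm b2) = 1%:M -> QX a1 b1 (qconjg k a2) (qconjg k b2).
Proof.
move=> [[n1 n2 n3 n4] E] nk c1; split.
  by split; rewrite // /qconjg !qnormM qnormC ?n3 ?n4 nk !mulr1.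
rewrite /qconjg !QmMr !QmV // [commut (_ * _) _]commutE -/(cm _ _) cm_conj ?QmU //.
by rewrite /cm -commutE c1 mulr1 mulrV ?QmU // -E c1 mulmx1.
Qed.

Lemma comm1 (a b : quat) : qnorm a = 1 -> qnorm b = 1 -> qmul a b = qmul b a ->
  commut (Qm a) (Qm b) = 1%:M.
Proof.
move=> na nb c; rewrite commutE (_ : Qm a * Qm b = Qm b * Qm a); last by rewrite -!QmMr c.
by rewrite mulrK ?QmU // mulrV ?QmU.
Qed.

Lemma rel1 (a1 b1 a2 b2 : quat) : QX a1 b1 a2 b2 -> commut (Qm a1) (Qm b1) = 1%:M ->
  commut (Qm a2) (Qm b2) = 1%:M.
Proof. by move=> [_ E] c; rewrite c mul1mx in E. Qed.

End Moves.

Section K.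
Variable R : realType.
Local Notation quat := (quat R).

Definition nn (x y z : R) := x ^+ 2 + y ^+ 2 + z ^+ 2.
Definition kq (s x y z : R) : quat :=
  Quat ((1 - s ^+ 2 * nn x y z) / (1 + s ^+ 2 * nn x y z))
       (2 * s * x / (1 + s ^+ 2 * nn x y z))
       (2 * s * y / (1 + s ^+ 2 * nn x y z))
       (2 * s * z / (1 + s ^+ 2 * nn x y z)).

Lemma nn_ge0 x y z : 0 <= nn x y z.
Proof. by rewrite /nn !addr_ge0 ?sqr_ge0. Qed.

Lemma kN_gt0 s x y z : 0 < 1 + s ^+ 2 * nn x y z.
Proof. have := nn_ge0 x y z; have := sqr_ge0 s; nra. Qed.

Lemma kq_norm s x y z : qnorm (kq s x y z) = 1.
Proof.
have N0 := kN_gt0 s x y z.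
move: N0; rewrite /qnorm /kq /nn /=; set n := x ^+ 2 + y ^+ 2 + z ^+ 2 => N0.
have NN : (1 + s ^+ 2 * n) != 0 by exact: lt0r_neq0.
have H : (1 + s ^+ 2 * n) * (1 + s ^+ 2 * n)^-1 = 1 by rewrite mulfV.
set iN := (1 + s ^+ 2 * n)^-1 in H *.
transitivity (((1 + s ^+ 2 * n) * iN) ^+ 2); last by rewrite H expr1n.
by rewrite /n; ring.
Qed.

Lemma kq_comm (p : quat) s : qmul p (kq s (q1 p) (q2 p) (q3 p)) = qmul (kq s (q1 p) (q2 p) (q3 p)) p.
Proof. rewrite /qmul /kq /=; apply: quatP; ring. Qed.

Lemma kq_comm0 (p : quat) s x y z : q1 p = 0 -> q2 p = 0 -> q3 p = 0 ->
  qmul p (kq s x y z) = qmul (kq s x y z) p.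
Proof. case: p => a b c d /= -> -> ->; rewrite /qmul /kq /=; apply: quatP; ring. Qed.

Definition qclose (e : R) (p p' : quat) : Prop :=
  [/\ `|q0 p - q0 p'| <= e, `|q1 p - q1 p'| <= e, `|q2 p - q2 p'| <= e & `|q3 p - q3 p'| <= e].

Definition kd (k : quat) (d : R) : Prop :=
  [/\ `|q0 k - 1| <= d, `|q1 k| <= d, `|q2 k| <= d & `|q3 k| <= d].

Lemma qclose_trans e e' p q r : qclose e p q -> qclose e' q r -> qclose (e + e') p r.
Proof.
have T (a b c : R) : `|a - b| <= e -> `|b - c| <= e' -> `|a - c| <= e + e'.
  move=> h1 h2; apply: le_trans (lerD h1 h2).
  by rewrite (_ : a - c = (a - b) + (b - c)) ?ler_normD //; ring.
by case=> h1 h2 h3 h4 [g1 g2 g3 g4]; split; apply: T; eauto.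
Qed.

Lemma qclose_refl e p : 0 <= e -> qclose e p p.
Proof. by move=> e0; split; rewrite subrr normr0. Qed.

Lemma qclose_le e e' p q : e <= e' -> qclose e p q -> qclose e' p q.
Proof. by move=> ee [h1 h2 h3 h4]; split; apply: le_trans ee. Qed.

Lemma coord_le1 (p : quat) : qnorm p = 1 ->
  [/\ `|q0 p| <= 1, `|q1 p| <= 1, `|q2 p| <= 1 & `|q3 p| <= 1].
Proof.
rewrite /qnorm => n1.
by split; rewrite ler_norml; apply/andP; split; nra.
Qed.

Lemma prod_bd (a b d : R) : `|a| <= 1 -> `|b| <= d -> - d <= a * b <= d.
Proof.
move=> ha hb; rewrite -ler_norml normrM.
have := normr_ge0 b; have := normr_ge0 a; nra.
Qed.

Lemma RM (p k : quat) d : qnorm p = 1 -> kd k d -> qclose (4 * d) (qmul p k) p.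
Proof.
move=> /coord_le1 [a0 a1 a2 a3] [k0 k1 k2 k3].
rewrite /qmul /=.
have /andP[? ?] := prod_bd a0 k0.
have /andP[? ?] := prod_bd a0 k1.
have /andP[? ?] := prod_bd a0 k2.
have /andP[? ?] := prod_bd a0 k3.
have /andP[? ?] := prod_bd a1 k0.
have /andP[? ?] := prod_bd a1 k1.
have /andP[? ?] := prod_bd a1 k2.
have /andP[? ?] := prod_bd a1 k3.
have /andP[? ?] := prod_bd a2 k0.
have /andP[? ?] := prod_bd a2 k1.
have /andP[? ?] := prod_bd a2 k2.
have /andP[? ?] := prod_bd a2 k3.
have /andP[? ?] := prod_bd a3 k0.
have /andP[? ?] := prod_bd a3 k1.
have /andP[? ?] := prod_bd a3 k2.
have /andP[? ?] := prod_bd a3 k3.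
by split; rewrite /= ler_norml; apply/andP; split; lra.
Qed.


Lemma LM (p k : quat) d : qnorm p = 1 -> kd k d -> qclose (4 * d) (qmul k p) p.
Proof.
move=> /coord_le1 [a0 a1 a2 a3] [k0 k1 k2 k3].
rewrite /qmul /=.
have /andP[? ?] := prod_bd a0 k0.
have /andP[? ?] := prod_bd a0 k1.
have /andP[? ?] := prod_bd a0 k2.
have /andP[? ?] := prod_bd a0 k3.
have /andP[? ?] := prod_bd a1 k0.
have /andP[? ?] := prod_bd a1 k1.
have /andP[? ?] := prod_bd a1 k2.
have /andP[? ?] := prod_bd a1 k3.
have /andP[? ?] := prod_bd a2 k0.
have /andP[? ?] := prod_bd a2 k1.
have /andP[? ?] := prod_bd a2 k2.
have /andP[? ?] := prod_bd a2 k3.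
have /andP[? ?] := prod_bd a3 k0.
have /andP[? ?] := prod_bd a3 k1.
have /andP[? ?] := prod_bd a3 k2.
have /andP[? ?] := prod_bd a3 k3.
by split; rewrite /= ler_norml; apply/andP; split; lra.
Qed.

Lemma kd_conj k d : kd k d -> kd (qconj k) d.
Proof. by case=> h0 h1 h2 h3; split; rewrite /= ?normrN. Qed.

Lemma conj_close (k p : quat) d : qnorm k = 1 -> qnorm p = 1 -> kd k d ->
  qclose (8 * d) (qconjg k p) p.
Proof.
move=> nk np kk.
have nu : qnorm (qmul k p) = 1 by rewrite qnormM nk np mulr1.
have h1 := RM nu (kd_conj kk).
have h2 := LM np kk.
have := qclose_trans h1 h2.
by rewrite (_ : 4 * d + 4 * d = 8 * d) //; ring.
Qed.

Lemma kq_small x y z d : 0 < d -> d <= 1 ->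
  exists s, [/\ s != 0, s ^+ 2 * nn x y z < 1 & kd (kq s x y z) d].
Proof.
move=> d0 d1.
set n := nn x y z.
have n0 : 0 <= n by exact: nn_ge0.
pose D := 2 * (1 + n + `|x| + `|y| + `|z|).
have D2 : 2 <= D.
  have := normr_ge0 x; have := normr_ge0 y; have := normr_ge0 z; rewrite /D; lra.
have Dx : 2 * `|x| <= D.
  have := normr_ge0 x; have := normr_ge0 y; have := normr_ge0 z; rewrite /D; lra.
have Dy : 2 * `|y| <= D.
  have := normr_ge0 x; have := normr_ge0 y; have := normr_ge0 z; rewrite /D; lra.
have Dz : 2 * `|z| <= D.
  have := normr_ge0 x; have := normr_ge0 y; have := normr_ge0 z; rewrite /D; lra.
have Dn : 2 * n <= D.
  have := normr_ge0 x; have := normr_ge0 y; have := normr_ge0 z; rewrite /D; lra.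
have D0 : 0 < D by lra.
pose s := d / D.
have sD : s * D = d by rewrite /s divfK // lt0r_neq0.
have s0 : 0 < s by rewrite /s divr_gt0.
have sn : s * n <= d / 2.
  have : s * (2 * n) <= s * D by rewrite ler_pM2l.
  lra.
have sle : s <= 1 / 2.
  have : s * 2 <= s * D by rewrite ler_pM2l.
  lra.
have s2n : s ^+ 2 * n <= d / 4 by rewrite expr2 -mulrA; nra.
have N0 : 0 < 1 + s ^+ 2 * n := kN_gt0 s x y z.
have N1 : 1 <= 1 + s ^+ 2 * n by have := sqr_ge0 s; nra.
have divb (a : R) : `|a / (1 + s ^+ 2 * n)| <= `|a|.
  rewrite normrM normfV (gtr0_norm N0) ler_pdivrMr //.
  have := normr_ge0 a; nra.
exists s; split.
- exact: lt0r_neq0.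
- lra.
- split; rewrite /kq /=.
  + have -> : (1 - s ^+ 2 * nn x y z) / (1 + s ^+ 2 * nn x y z) - 1 =
        (- 2 * (s ^+ 2 * n)) / (1 + s ^+ 2 * n).
      rewrite -/n; field; exact: lt0r_neq0.
    apply: le_trans (divb _) _.
    have := mulr_ge0 (sqr_ge0 s) n0; rewrite ler_norml => ?; apply/andP; split; lra.
  + apply: le_trans (divb _) _.
    rewrite normrM (@ger0_norm _ (2 * s)); last lra.
    have : s * (2 * `|x|) <= s * D by rewrite ler_pM2l.
    lra.
  + apply: le_trans (divb _) _.
    rewrite normrM (@ger0_norm _ (2 * s)); last lra.
    have : s * (2 * `|y|) <= s * D by rewrite ler_pM2l.
    lra.
  + apply: le_trans (divb _) _.
    rewrite normrM (@ger0_norm _ (2 * s)); last lra.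
    have : s * (2 * `|z|) <= s * D by rewrite ler_pM2l.
    lra.
Qed.

End K.

Section D.
Variable R : realType.
Local Notation quat := (quat R).

Definition cr2 (x y z u v w : R) := (y * w - z * v) ^+ 2 + (z * u - x * w) ^+ 2 + (x * v - y * u) ^+ 2.

Lemma ID1 (a m x y z c u1 u2 u3 b0 : R) :
  crs2 (qmul (Quat a (m * x) (m * y) (m * z)) (Quat c u1 u2 u3)) (Quat b0 x y z) =
  (a ^+ 2 + m ^+ 2 * nn x y z) * cr2 u1 u2 u3 x y z.
Proof. rewrite /crs2 /cr2 /nn /qmul /=; ring. Qed.

Lemma ID2 (a m x y z c u1 u2 u3 b0 : R) :
  crs2 (Quat a (m * x) (m * y) (m * z)) (qconjg (Quat c u1 u2 u3) (Quat b0 x y z)) =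
  m ^+ 2 * (4 * (u1 * x + u2 * y + u3 * z) ^+ 2 * cr2 u1 u2 u3 x y z +
            4 * c ^+ 2 * nn x y z * cr2 u1 u2 u3 x y z).
Proof. rewrite /crs2 /cr2 /nn /qconjg /qconj /qmul /=; ring. Qed.


Lemma sq3_eq0 (a b c : R) : a ^+ 2 + b ^+ 2 + c ^+ 2 <= 0 -> [/\ a = 0, b = 0 & c = 0].
Proof.
move=> h; have ha := sqr_ge0 a; have hb := sqr_ge0 b; have hc := sqr_ge0 c.
split; apply/eqP; rewrite -sqrf_eq0; apply/eqP; lra.
Qed.

Lemma crs2_ge0 (b d : quat) : 0 <= crs2 b d.
Proof. by rewrite /crs2 !addr_ge0 ?sqr_ge0. Qed.

Lemma cr2_ge0 x y z u v w : 0 <= cr2 x y z u v w.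
Proof. by rewrite /cr2 !addr_ge0 ?sqr_ge0. Qed.

Lemma eq_via (L Rr E : R) : L - Rr = E -> E = 0 -> L = Rr.
Proof. by move=> h e; apply/eqP; rewrite -subr_eq0 h e. Qed.

Lemma par (b1 b2 : quat) : crs2 b1 b2 <= 0 -> 0 < nn (q1 b2) (q2 b2) (q3 b2) ->
  exists m, b1 = Quat (q0 b1) (m * q1 b2) (m * q2 b2) (m * q3 b2).
Proof.
case: b1 b2 => a p q r [b x y z] /= h n0.
have [c1 c2 c3] := sq3_eq0 h.
have nz : nn x y z != 0 by exact: lt0r_neq0.
exists ((p * x + q * y + r * z) / nn x y z).
have key (t t' : R) : t * nn x y z = (p * x + q * y + r * z) * t' ->
    t = (p * x + q * y + r * z) / nn x y z * t'.
  by move=> e; apply: (mulIf nz); rewrite e; field.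
apply: quatP => //; apply: key.
- apply: (eq_via (E := (p * y - q * x) * y - (r * x - p * z) * z)); first by rewrite /nn; ring.
  by rewrite c2 c3; ring.
- apply: (eq_via (E := (q * z - r * y) * z - (p * y - q * x) * x)); first by rewrite /nn; ring.
  by rewrite c1 c3; ring.
- apply: (eq_via (E := (r * x - p * z) * x - (q * z - r * y) * y)); first by rewrite /nn; ring.
  by rewrite c1 c2; ring.
Qed.


Lemma sq_pos (x : R) : x != 0 -> 0 < x ^+ 2.
Proof. by move=> h; rewrite lt_def sqrf_eq0 h sqr_ge0. Qed.

Definition kt (s x y z : R) := 2 * s / (1 + s ^+ 2 * nn x y z).

Lemma kt_neq0 s x y z : s != 0 -> kt s x y z != 0.
Proof.
move=> s0; rewrite /kt mulf_neq0 ?invr_eq0 ?mulf_neq0 ?pnatr_eq0 //.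
exact: lt0r_neq0 (kN_gt0 s x y z).
Qed.

Lemma kq_imE s x y z : kq s x y z =
  Quat (q0 (kq s x y z)) (kt s x y z * x) (kt s x y z * y) (kt s x y z * z).
Proof. rewrite /kq /kt /=; apply: quatP => //; ring. Qed.

Lemma kq_nn s x y z : nn (q1 (kq s x y z)) (q2 (kq s x y z)) (q3 (kq s x y z)) =
  kt s x y z ^+ 2 * nn x y z.
Proof. rewrite kq_imE /=; set t := kt s x y z; rewrite /nn; ring. Qed.

Lemma im_central (a : R) (k : quat) :
  nn (q1 (qmul (Quat a 0 0 0) k)) (q2 (qmul (Quat a 0 0 0) k)) (q3 (qmul (Quat a 0 0 0) k)) =
  a ^+ 2 * nn (q1 k) (q2 k) (q3 k).
Proof. rewrite /nn /qmul /=; ring. Qed.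

Lemma S1core (a1 b1 a2 b2 : quat) d w1 w2 w3 : QX a1 b1 a2 b2 -> 0 < d -> d <= 1 ->
  0 < nn w1 w2 w3 -> (forall s, qmul a1 (kq s w1 w2 w3) = qmul (kq s w1 w2 w3) a1) ->
  nn (q1 b1) (q2 b1) (q3 b1) <= 0 ->
  exists b1', [/\ QX a1 b1' a2 b2, qclose (4 * d) b1' b1 & 0 < nn (q1 b1') (q2 b1') (q3 b1')].
Proof.
move=> H d0 d1 w0 hc hb.
have [s [s0 _ kk]] := kq_small w1 w2 w3 d0 d1.
have nb1 : qnorm b1 = 1 by case: H => -[].
exists (qmul b1 (kq s w1 w2 w3)); split.
- exact: move1 H (kq_norm _ _ _ _) (hc s).
- exact: RM nb1 kk.
- move: nb1 hb; clear H; case: b1 => a p q r /= nb1 hb.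
  have [e1 e2 e3] := sq3_eq0 hb; subst p q r.
  have E := im_central a (kq s w1 w2 w3); simpl in E; rewrite E; clear E.
  have -> : a ^+ 2 = 1 by move: nb1; rewrite /qnorm /=; lra.
  rewrite mul1r; have E2 := kq_nn s w1 w2 w3; simpl in E2; rewrite E2.
  by rewrite mulr_gt0 // sq_pos // kt_neq0.
Qed.

Lemma S2core (a1 b1 a2 b2 : quat) d w1 w2 w3 : QX a1 b1 a2 b2 -> 0 < d -> d <= 1 ->
  0 < nn w1 w2 w3 -> (forall s, qmul a2 (kq s w1 w2 w3) = qmul (kq s w1 w2 w3) a2) ->
  nn (q1 b2) (q2 b2) (q3 b2) <= 0 ->
  exists b2', [/\ QX a1 b1 a2 b2', qclose (4 * d) b2' b2 & 0 < nn (q1 b2') (q2 b2') (q3 b2')].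
Proof.
move=> H d0 d1 w0 hc hb.
have [s [s0 _ kk]] := kq_small w1 w2 w3 d0 d1.
have nb2 : qnorm b2 = 1 by case: H => -[].
exists (qmul b2 (kq s w1 w2 w3)); split.
- exact: move2 H (kq_norm _ _ _ _) (hc s).
- exact: RM nb2 kk.
- move: nb2 hb; clear H; case: b2 => a p q r /= nb2 hb.
  have [e1 e2 e3] := sq3_eq0 hb; subst p q r.
  have E := im_central a (kq s w1 w2 w3); simpl in E; rewrite E; clear E.
  have -> : a ^+ 2 = 1 by move: nb2; rewrite /qnorm /=; lra.
  rewrite mul1r; have E2 := kq_nn s w1 w2 w3; simpl in E2; rewrite E2.
  by rewrite mulr_gt0 // sq_pos // kt_neq0.
Qed.


Lemma nn100 : 0 < nn 1 0 0 :> R.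
Proof. by rewrite /nn expr1n expr0n !addr0 ltr01. Qed.

Lemma S1 (a1 b1 a2 b2 : quat) d : QX a1 b1 a2 b2 -> 0 < d -> d <= 1 ->
  exists b1', [/\ QX a1 b1' a2 b2, qclose (4 * d) b1' b1 & 0 < nn (q1 b1') (q2 b1') (q3 b1')].
Proof.
move=> H d0 d1.
case: (ltP 0 (nn (q1 b1) (q2 b1) (q3 b1))) => hb.
  by exists b1; split => //; apply: qclose_refl; lra.
case: (ltP 0 (nn (q1 a1) (q2 a1) (q3 a1))) => ha.
  exact: S1core H d0 d1 ha (fun s => kq_comm a1 s) hb.
have [e1 e2 e3] := sq3_eq0 ha.
apply: (S1core (w1 := 1) (w2 := 0) (w3 := 0) H d0 d1 nn100 _ hb).
by move=> s; apply: kq_comm0.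
Qed.

Lemma S2 (a1 b1 a2 b2 : quat) d : QX a1 b1 a2 b2 -> 0 < d -> d <= 1 ->
  exists b2', [/\ QX a1 b1 a2 b2', qclose (4 * d) b2' b2 & 0 < nn (q1 b2') (q2 b2') (q3 b2')].
Proof.
move=> H d0 d1.
case: (ltP 0 (nn (q1 b2) (q2 b2) (q3 b2))) => hb.
  by exists b2; split => //; apply: qclose_refl; lra.
case: (ltP 0 (nn (q1 a2) (q2 a2) (q3 a2))) => ha.
  exact: S2core H d0 d1 ha (fun s => kq_comm a2 s) hb.
have [e1 e2 e3] := sq3_eq0 ha.
apply: (S2core (w1 := 1) (w2 := 0) (w3 := 0) H d0 d1 nn100 _ hb).
by move=> s; apply: kq_comm0.
Qed.

Lemma qnorm_par (a m x y z : R) : qnorm (Quat a (m * x) (m * y) (m * z)) = a ^+ 2 + m ^+ 2 * nn x y z.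
Proof. rewrite /qnorm /nn /=; ring. Qed.

Lemma cr2_scale (t w1 w2 w3 x y z : R) : cr2 (t * w1) (t * w2) (t * w3) x y z = t ^+ 2 * cr2 w1 w2 w3 x y z.
Proof. rewrite /cr2; ring. Qed.

Lemma S3core_a (a1 b1 a2 b2 : quat) d w1 w2 w3 : QX a1 b1 a2 b2 -> 0 < d -> d <= 1 ->
  crs2 b1 b2 <= 0 -> 0 < nn (q1 b2) (q2 b2) (q3 b2) ->
  0 < cr2 w1 w2 w3 (q1 b2) (q2 b2) (q3 b2) ->
  (forall s, qmul a1 (kq s w1 w2 w3) = qmul (kq s w1 w2 w3) a1) ->
  exists b1', [/\ QX a1 b1' a2 b2, qclose (4 * d) b1' b1 & 0 < crs2 b1' b2].
Proof.
move=> H d0 d1 hc hn hw hk.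
have [s [s0 _ kk]] := kq_small w1 w2 w3 d0 d1.
have nb1 : qnorm b1 = 1 by case: H => -[].
exists (qmul b1 (kq s w1 w2 w3)); split.
- exact: move1 H (kq_norm _ _ _ _) (hk s).
- exact: RM nb1 kk.
- have [m E] := par hc hn.
  move: nb1 hw; rewrite E; clear H E hc kk hk.
  case: b2 hn => b0 x y z /= hn.
  rewrite kq_imE ID1 qnorm_par => -> hw.
  by rewrite mul1r cr2_scale mulr_gt0 // sq_pos // kt_neq0.
Qed.

Lemma kq0_neq0 (s x y z : R) : s ^+ 2 * nn x y z < 1 -> q0 (kq s x y z) != 0.
Proof.
move=> h; rewrite /kq /= mulf_neq0 ?invr_eq0 //.
  by rewrite subr_eq0 eq_sym lt_eqF.
exact: lt0r_neq0 (kN_gt0 s x y z).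
Qed.

Lemma S3core_c (a1 b1 a2 b2 : quat) d w1 w2 w3 : QX a1 b1 a2 b2 -> 0 < d -> d <= 1 ->
  crs2 b1 b2 <= 0 -> 0 < nn (q1 b1) (q2 b1) (q3 b1) -> 0 < nn (q1 b2) (q2 b2) (q3 b2) ->
  0 < cr2 w1 w2 w3 (q1 b2) (q2 b2) (q3 b2) ->
  commut (Qm a2) (Qm b2) = 1%:M ->
  exists a2' b2', [/\ QX a1 b1 a2' b2', qclose (8 * d) a2' a2, qclose (8 * d) b2' b2
     & 0 < crs2 b1 b2'].
Proof.
move=> H d0 d1 hc hn1 hn hw c1.
have [s [s0 sl kk]] := kq_small w1 w2 w3 d0 d1.
have [[n1 n2 n3 n4] _] := H.
exists (qconjg (kq s w1 w2 w3) a2), (qconjg (kq s w1 w2 w3) b2); split.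
- exact: move4 H (kq_norm _ _ _ _) c1.
- exact: conj_close (kq_norm _ _ _ _) n3 kk.
- exact: conj_close (kq_norm _ _ _ _) n4 kk.
- have [m E] := par hc hn.
  have c0 := kq0_neq0 sl.
  move: hn1 hw c0; rewrite E /=; clear H E hc kk c1.
  case: b2 hn n4 => b0 x y z /= hn _.
  rewrite kq_imE ID2 /= => hn1 hw c0.
  have hm : m != 0.
    apply/negP => /eqP m0; move: hn1; rewrite m0 !mul0r.
    by rewrite /nn expr0n /= !addr0 ltxx.
  rewrite !cr2_scale.
  set t := kt s w1 w2 w3; set c := (1 - s ^+ 2 * nn w1 w2 w3) / (1 + s ^+ 2 * nn w1 w2 w3).
  have t2 : 0 < t ^+ 2 by rewrite sq_pos // kt_neq0.
  have c2 : 0 < c ^+ 2 by rewrite sq_pos.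
  have m2 : 0 < m ^+ 2 by rewrite sq_pos.
  have A : 0 <= 4 * (t * w1 * x + t * w2 * y + t * w3 * z) ^+ 2 * (t ^+ 2 * cr2 w1 w2 w3 x y z).
    apply: mulr_ge0; first (apply: mulr_ge0; [by rewrite ler0n | exact: sqr_ge0]).
    by apply: mulr_ge0; [exact: sqr_ge0 | exact: ltW].
  have B : 0 < 4 * c ^+ 2 * nn x y z * (t ^+ 2 * cr2 w1 w2 w3 x y z).
    apply: mulr_gt0; last exact: mulr_gt0.
    by apply: mulr_gt0 => //; apply: mulr_gt0 => //; rewrite ltr0n.
  apply: mulr_gt0 => //; lra.
Qed.

Lemma pick_w (x y z : R) : 0 < nn x y z -> exists w1 w2 w3, 0 < cr2 w1 w2 w3 x y z.
Proof.
move=> h.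
case: (ltP 0 (y ^+ 2 + z ^+ 2)) => hyz.
  exists 1, 0, 0; rewrite /cr2.
  have -> : (0 * z - 0 * y) ^+ 2 + (0 * x - 1 * z) ^+ 2 + (1 * y - 0 * x) ^+ 2 = y ^+ 2 + z ^+ 2 by ring.
  done.
exists 0, 1, 0; rewrite /cr2.
have -> : (1 * z - 0 * y) ^+ 2 + (0 * x - 0 * z) ^+ 2 + (0 * y - 1 * x) ^+ 2 = z ^+ 2 + x ^+ 2 by ring.
move: h; rewrite /nn; have := sqr_ge0 y; have := sqr_ge0 z; lra.
Qed.


Lemma comm_par (a1 : quat) a m x y z : cr2 (q1 a1) (q2 a1) (q3 a1) x y z <= 0 ->
  qmul a1 (Quat a (m * x) (m * y) (m * z)) = qmul (Quat a (m * x) (m * y) (m * z)) a1.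
Proof.
case: a1 => p0 u1 u2 u3 /= h; have [c1 c2 c3] := sq3_eq0 h.
rewrite /qmul /=; apply: quatP.
- ring.
- apply: (eq_via (E := 2 * m * (u2 * z - u3 * y))); first ring. by rewrite c1 mulr0.
- apply: (eq_via (E := 2 * m * (u3 * x - u1 * z))); first ring. by rewrite c2 mulr0.
- apply: (eq_via (E := 2 * m * (u1 * y - u2 * x))); first ring. by rewrite c3 mulr0.
Qed.

Lemma S3 (a1 b1 a2 b2 : quat) d : QX a1 b1 a2 b2 -> 0 < d -> d <= 1 ->
  0 < nn (q1 b1) (q2 b1) (q3 b1) -> 0 < nn (q1 b2) (q2 b2) (q3 b2) ->
  exists a1' b1' a2' b2', [/\ QX a1' b1' a2' b2', qclose (8 * d) a1' a1, qclose (8 * d) b1' b1,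
     qclose (8 * d) a2' a2 & qclose (8 * d) b2' b2 /\ 0 < crs2 b1' b2'].
Proof.
move=> H d0 d1 hn1 hn2.
have r8 : forall p : quat, qclose (8 * d) p p by move=> p; apply: qclose_refl; lra.
have l48 : 4 * d <= 8 * d by lra.
case: (ltP 0 (crs2 b1 b2)) => hc.
  by exists a1, b1, a2, b2; split.
case: (ltP 0 (cr2 (q1 a1) (q2 a1) (q3 a1) (q1 b2) (q2 b2) (q3 b2))) => hw.
  have [b1' [H' c' g']] := S3core_a H d0 d1 hc hn2 hw (fun s => kq_comm a1 s).
  by exists a1, b1', a2, b2; split => //; apply: qclose_le c'.
have [[n1 n2 n3 n4] _] := H.
have cm1 : commut (Qm a1) (Qm b1) = 1%:M.
  apply: comm1 => //.
  have [m E] := par hc hn2; rewrite E; exact: comm_par.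
have cm2 := rel1 H cm1.
have [w1 [w2 [w3 hw']]] := pick_w hn2.
have [a2' [b2' [H' ca cb g]]] := S3core_c H d0 d1 hc hn1 hn2 hw' cm2.
by exists a1, b1, a2', b2'; split.
Qed.

Lemma qdense (a1 b1 a2 b2 : quat) e : QX a1 b1 a2 b2 -> 0 < e ->
  exists a1' b1' a2' b2', [/\ QX a1' b1' a2' b2', qclose e a1' a1, qclose e b1' b1,
     qclose e a2' a2 & qclose e b2' b2 /\ 0 < crs2 b1' b2'].
Proof.
move=> H e0.
pose d := Num.min 1 (e / 12).
have d0 : 0 < d by rewrite /d lt_min ltr01 /=; lra.
have d1 : d <= 1 by rewrite /d ge_min lexx.
have de : d <= e / 12 by rewrite /d ge_min lexx orbT.
have [b1' [H1 c1 g1]] := S1 H d0 d1.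
have [b2' [H2 c2 g2]] := S2 H1 d0 d1.
have [a1'' [b1'' [a2'' [b2'' [H3 k1 k2 k3 [k4 g]]]]]] := S3 H2 d0 d1 g1 g2.
exists a1'', b1'', a2'', b2''; split => //.
- by apply: qclose_le k1; lra.
- by apply: qclose_le (qclose_trans k2 c1); lra.
- by apply: qclose_le k3; lra.
- by split => //; apply: qclose_le (qclose_trans k4 c2); lra.
Qed.

End D.

Section G.
Variable R : realType.
Local Notation C := (R[i]).
Local Notation quat := (quat R).

Lemma Xrep_dec (x : quad R) : Xrep x ->
  exists a1 b1 a2 b2, x = (Qm a1, Qm b1, Qm a2, Qm b2) /\ QX a1 b1 a2 b2.
Proof.
case: x => [[[g1 h1] g2] h2] /= [[s1 s2 s3 s4] E].
have [a1 [e1 n1]] := SU2_decomp s1.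
have [b1 [e2 n2]] := SU2_decomp s2.
have [a2 [e3 n3]] := SU2_decomp s3.
have [b2 [e4 n4]] := SU2_decomp s4.
subst g1 h1 g2 h2.
by exists a1, b1, a2, b2; split => //; split.
Qed.

Lemma QX_Xrep (a1 b1 a2 b2 : quat) : QX a1 b1 a2 b2 -> Xrep (Qm a1, Qm b1, Qm a2, Qm b2).
Proof. by case=> -[n1 n2 n3 n4] E; split => //; split; apply: SU2_Qm. Qed.

Lemma fK_Qm (p : quat) : fK (Qm p) = acos (q0 p) / pi.
Proof.
rewrite /fK tr_Qm /=; congr (acos _ / pi).
by rewrite mulr2n; lra.
Qed.

Lemma mu_rep_Qm (a1 b1 a2 b2 : quat) :
  mu_rep (Qm a1, Qm b1, Qm a2, Qm b2) =
  pt3 (acos (q0 b1) / pi) (acos (q0 b2) / pi) (acos (q0 (qmul b1 b2)) / pi).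
Proof. by rewrite /mu_rep /pt3 QmM !fK_Qm. Qed.

Lemma cnorm_lt (a b e : R) : 0 < e -> a ^+ 2 + b ^+ 2 < e ^+ 2 -> `|(a +i* b)%C| < (e%:C)%C.
Proof.
move=> e0 h; rewrite normc_def /= ltcR.
rewrite -(gtr0_norm e0) -sqrtr_sqr ltr_sqrt ?exprn_gt0 ?normr_gt0 ?lt0r_neq0 //.
Qed.

Lemma abs_sq (a d : R) : `|a| <= d -> a ^+ 2 <= d ^+ 2.
Proof. by rewrite ler_norml => /andP[h1 h2]; nra. Qed.

Lemma Qm_close (p p' : quat) d e : qclose d p' p -> 2 * d < e ->
  forall i j, `|Qm p i j - Qm p' i j| < (e%:C)%C.
Proof.
case=> h0 h1 h2 h3 de i j.
have d0 : 0 <= d by apply: le_trans h0.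
have e0 : 0 < e by lra.
move: h0 h1 h2 h3 => /abs_sq h0 /abs_sq h1 /abs_sq h2 /abs_sq h3.
have ee : 4 * d ^+ 2 < e ^+ 2 by nra.
rewrite !mxE /Qe.
by case: (ord2P i) => ->; case: (ord2P j) => -> /=; apply: cnorm_lt => //; nra.
Qed.


Lemma SU2_unit (k : 'M[C]_2) : SU2 k -> k \in unitmx.
Proof. by case=> _ d; rewrite unitmxE d unitr1. Qed.

Lemma fK_conj (k h : 'M[C]_2) : k \in unitmx -> fK (k *m h *m invmx k) = fK h.
Proof. by move=> u; rewrite /fK mxtrace_mulC mulmxA mulVmx // mul1mx. Qed.

Lemma mu_rep_conj (k : 'M[C]_2) (y : quad R) : SU2 k -> mu_rep (conjq k y) = mu_rep y.
Proof.
move=> /SU2_unit u; case: y => [[[g1 h1] g2] h2] /=.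
rewrite !fK_conj //.
have -> : k *m h1 *m invmx k *m (k *m h2 *m invmx k) = k *m (h1 *m h2) *m invmx k.
  by rewrite !mulmxA mulmxKV.
by rewrite fK_conj.
Qed.

Lemma conjq1 (y : quad R) : conjq 1%:M y = y.
Proof. by case: y => [[[g1 h1] g2] h2] /=; rewrite invmx1 !mul1mx !mulmx1. Qed.

Lemma SU2_1 : SU2 (1%:M : 'M[C]_2).
Proof. by split; rewrite ?det1 // /conjT map_mx1 trmx1 mulmx1. Qed.

Lemma mu_qmap (x : Xtype R) : mu (qmap x) = mu_rep (proj1_sig x).
Proof.
rewrite /mu /rep; case: (cid _) => r /= E.
have : Defs.orbit (proj1_sig x) (proj1_sig x) by exists 1%:M; [exact: SU2_1 | rewrite conjq1].
rewrite E => -[k sk ->].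
by rewrite mu_rep_conj.
Qed.

Lemma qmap_surj (m : Mspace R) : exists x, m = qmap x.
Proof.
case: m => S pf; have [x ex] := pf; exists x; rewrite /qmap.
move: pf; rewrite ex => pf; congr exist; exact: Prop_irrelevance.
Qed.

Lemma dense_part : denseM (@Mcirc R).
Proof.
move=> V oV [m Vm].
have [x ex] := qmap_surj m; subst m.
have [e e0 He] := oV x Vm.
have [a1 [b1 [a2 [b2 [ex' H]]]]] := Xrep_dec (proj2_sig x).
have e4 : 0 < e / 4 by lra.
have [a1' [b1' [a2' [b2' [H' c1 c2 c3 [c4 g]]]]]] := qdense H e4.
pose y : Xtype R := exist _ (Qm a1', Qm b1', Qm a2', Qm b2') (QX_Xrep H').
exists (qmap y); split.
- apply: He; rewrite ex' /y /= => i j.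
  have de : 2 * (e / 4) < e by lra.
  by split; [exact: (Qm_close c1 de) | exact: (Qm_close c2 de) | exact: (Qm_close c3 de) | exact: (Qm_close c4 de)].
- rewrite /Mcirc /preimage /= mu_qmap (_ : proj1_sig y = (Qm a1', Qm b1', Qm a2', Qm b2')) // mu_rep_Qm.
  by have [[_ n2 _ n4] _] := H'; apply: good_int.
Qed.

End G.

Section O.
Variable R : realType.
Local Notation C := (R[i]).
Local Notation quat := (quat R).

Lemma tetra_coords (q : 'rV[R]_3) j : tetra q -> 0 <= q ord0 j <= 1.
Proof.
case=> l [l0 [ls ->]]; rewrite sum4 in ls.
have := l0 (@Ordinal 4 0 isT); have := l0 (@Ordinal 4 1 isT).
have := l0 (@Ordinal 4 2 isT); have := l0 (@Ordinal 4 3 isT).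
rewrite summxE sum4 !mxE /=.
by case: (ord3P j) => [|[]] -> /= *; apply/andP; split; lra.
Qed.

Lemma int_coords (p : 'rV[R]_3) j : tetra_int p -> 0 < p ord0 j < 1.
Proof.
rewrite /tetra_int /interior /= => /nbhs_ballP [e /= e0 He].
pose q (sg : R) : 'rV[R]_3 := \row_k (p ord0 k + (if k == j then sg * (e / 2) else 0)).
have qb sg : sg ^+ 2 = 1 -> ball p e (q sg).
  move=> s1; split => // i k; rewrite /ball /= !mxE (ord1 i).
  case: eqP => _; last by rewrite addr0 subrr normr0.
  rewrite opprD addrA subrr add0r normrN normrM.
  have -> : `|sg| = 1 by rewrite -sqrtr_sqr s1 sqrtr1.
  rewrite mul1r gtr0_norm; lra.
have sm : (-1 : R) ^+ 2 = 1 by rewrite sqrrN expr1n.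
have sp : (1 : R) ^+ 2 = 1 by rewrite expr1n.
have h1 := tetra_coords j (He _ (qb (-1) sm)).
have h2 := tetra_coords j (He _ (qb 1 sp)).
move: h1 h2; rewrite !mxE eqxx => /andP[h1 _] /andP[_ h2].
apply/andP; split; lra.
Qed.

Lemma acos_eps (c : R) : -1 < c < 1 -> forall e : R, 0 < e ->
  exists2 d, 0 < d & forall c', `|c - c'| < d -> `|acos c - acos c'| < e.
Proof.
move=> hc e e0.
have := @cvgr_dist_lt _ _ _ (nbhs c) _ (@acos R) (acos c) (continuous_acos hc) e e0.
move=> H; have [d /= d0 Hd] := (nbhs_ballP _ _).1 (H (nbhs_filter _)); exists d => // c' hc'.
Qed.


Lemma cnorm_parts (a b e : R) : `|(a +i* b)%C| < (e%:C)%C -> `|a| < e /\ `|b| < e.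
Proof.
rewrite normc_def /= ltcR => h.
have s0 := sqrtr_ge0 (a ^+ 2 + b ^+ 2).
have e0 : 0 < e by apply: le_lt_trans h.
have h2 : a ^+ 2 + b ^+ 2 < e ^+ 2.
  rewrite -(sqr_sqrtr (_ : 0 <= a ^+ 2 + b ^+ 2)); last by rewrite addr_ge0 ?sqr_ge0.
  by rewrite ltr_pXn2r // ?nnegrE // ltW.
have na := normr_ge0 a; have nb := normr_ge0 b.
have ea : `|a| ^+ 2 = a ^+ 2 by rewrite real_normK // num_real.
have eb : `|b| ^+ 2 = b ^+ 2 by rewrite real_normK // num_real.
have := sqr_ge0 a; have := sqr_ge0 b.
split; nra.
Qed.

Lemma Qm_coords (p p' : quat) e : (forall i j, `|Qm p i j - Qm p' i j| < (e%:C)%C) ->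
  [/\ `|q0 p - q0 p'| < e, `|q1 p - q1 p'| < e, `|q2 p - q2 p'| < e & `|q3 p - q3 p'| < e].
Proof.
move=> H.
have := H ord0 ord0; rewrite !mxE /Qe /= => /cnorm_parts [h0 h1].
have := H ord0 ord_max; rewrite !mxE /Qe /= => /cnorm_parts [h2 h3].
by split.
Qed.

Lemma prod0_close (b d b' d' : quat) (h : R) : qnorm d = 1 -> qnorm b' = 1 ->
  [/\ `|q0 b - q0 b'| < h, `|q1 b - q1 b'| < h, `|q2 b - q2 b'| < h & `|q3 b - q3 b'| < h] ->
  [/\ `|q0 d - q0 d'| < h, `|q1 d - q1 d'| < h, `|q2 d - q2 d'| < h & `|q3 d - q3 d'| < h] ->
  `|q0 (qmul b d) - q0 (qmul b' d')| <= 8 * h.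
Proof.
move=> /coord_le1 [a0 a1 a2 a3] /coord_le1 [e0 e1 e2 e3] [x0 x1 x2 x3] [y0 y1 y2 y3].
have /andP[? ?] := prod_bd a0 (ltW x0).
have /andP[? ?] := prod_bd a1 (ltW x1).
have /andP[? ?] := prod_bd a2 (ltW x2).
have /andP[? ?] := prod_bd a3 (ltW x3).
have /andP[? ?] := prod_bd e0 (ltW y0).
have /andP[? ?] := prod_bd e1 (ltW y1).
have /andP[? ?] := prod_bd e2 (ltW y2).
have /andP[? ?] := prod_bd e3 (ltW y3).
rewrite /qmul /= ler_norml; apply/andP; split; lra.
Qed.

Lemma c_range (c : R) : -1 <= c <= 1 -> 0 < acos c / pi < 1 -> -1 < c < 1.
Proof.
move=> /andP[c1 c2] /andP[h1 h2].
have pi0 := pi_gt0 R.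
apply/andP; split; rewrite lt_neqAle ?c1 ?c2 andbT.
- apply/eqP => e; move: h2; rewrite -e acosN1 divff ?ltxx //; exact: lt0r_neq0.
- apply/eqP => e; move: h1; rewrite e acos1 mul0r ltxx //.
Qed.

Lemma unit_range (p : quat) : qnorm p = 1 -> -1 <= q0 p <= 1.
Proof. by case/coord_le1 => h _ _ _; rewrite -ler_norml. Qed.


Lemma acos_close_f (c c' e : R) :
  `|acos c - acos c'| < e * pi -> `|acos c / pi - acos c' / pi| < e.
Proof.
have pi0 := pi_gt0 R.
move=> h; rewrite -mulrBl normrM (@gtr0_norm _ pi^-1) ?invr_gt0 // ltr_pdivrMr //.
Qed.

Lemma open_part : openM (@Mcirc R).
Proof.
move=> x hx.
move: hx; rewrite /preimage /Mcirc /= mu_qmap => hx.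
have [a1 [b1 [a2 [b2 [ex H]]]]] := Xrep_dec (proj2_sig x).
have [[n1 n2 n3 n4] _] := H.
move: hx; rewrite ex mu_rep_Qm => hx.
have hx' := hx.
move: hx' => /int_coords hc.
have hc0 := hc (@Ordinal 3 0 isT); have hc1 := hc (@Ordinal 3 1 isT); have hc2 := hc (@Ordinal 3 2 isT).
move: hc0 hc1 hc2; rewrite !mxE /= => hc0 hc1 hc2.
have n12 : qnorm (qmul b1 b2) = 1 by rewrite qnormM n2 n4 mulr1.
have r0 := c_range (unit_range n2) hc0.
have r1 := c_range (unit_range n4) hc1.
have r2 := c_range (unit_range n12) hc2.
have op : open (@tetra_int R) by exact: open_interior.
have := op _ hx; rewrite /interior => /nbhs_ballP [e /= e0 He].
have pi0 := pi_gt0 R.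
have ep : 0 < e * pi by rewrite mulr_gt0.
have [d0 d00 D0] := acos_eps r0 ep.
have [d1 d10 D1] := acos_eps r1 ep.
have [d2 d20 D2] := acos_eps r2 ep.
pose h := Num.min d0 (Num.min d1 (d2 / 16)).
have h0 : 0 < h by rewrite /h !lt_min d00 d10 /=; lra.
have hd0 : h <= d0 by rewrite /h ge_min lexx.
have hd1 : h <= d1 by rewrite /h !ge_min lexx orbT.
have hd2 : h <= d2 / 16 by rewrite /h !ge_min lexx !orbT.
exists h => // y hy.
have [a1' [b1' [a2' [b2' [ey H']]]]] := Xrep_dec (proj2_sig y).
have [[m1 m2 m3 m4] _] := H'.
rewrite /preimage /Mcirc /= mu_qmap ey mu_rep_Qm.
move: hy; rewrite ey /= => hy.
have hb1 : forall i j, `|Qm b1 i j - Qm b1' i j| < (h%:C)%C by move=> i j; case: (hy i j).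
have hb2 : forall i j, `|Qm b2 i j - Qm b2' i j| < (h%:C)%C by move=> i j; case: (hy i j).
have cb1 := Qm_coords hb1.
have cb2 := Qm_coords hb2.
have p3 := prod0_close n4 m2 cb1 cb2.
apply: He; split => // i k; rewrite /ball /= (ord1 i) !mxE.
case: cb1 => g0 _ _ _; case: cb2 => g1 _ _ _.
case: (ord3P k) => [|[]] -> /=; apply: acos_close_f.
- by apply: D0; lra.
- by apply: D1; lra.
- by apply: D2; lra.
Qed.

End O.

Theorem mainTheorem10 (R : realType) :
  openM (@Mcirc R) /\ denseM (@Mcirc R).
Proof. split; [exact: open_part | exact: dense_part]. Qed.
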